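(* Let $n\ge 4$. Let $B_1$ and $B_2$ be squares of type B for the EvenQuads-$2^n$ deck, and suppose they have the same repeat pattern up to shuffling rows/columns and reflection along the main diagonal; that is, there is a map $t$ of the set of $16$ positions, which is a composition of a permutation of the rows, a permutation of the columns, and possibly the reflection along the main diagonal, such that for all positions $p,q$ one has $B_1(p)=B_1(q)$ if and only if $B_2(t(p))=B_2(t(q))$. Then the number of legit pairs of $B_1$ equals the number of legit pairs of $B_2$.
   Context: Cards of the EvenQuads-$2^n$ deck are the integers $0,\dots,2^n-1$; four integers form a quad iff their bitwise XOR $\oplus$ is $0$. In this context a square is a $4\times4$ array of such integers (repetitions allowed) in which every row and every column has bitwise XOR $0$. A square of type A is such a square with all entries in $\{0,\dots,15\}$, first row $0,1,2,3$ and first column $0,4,8,12$. A square of type B is such a square with all entries divisible by $16$ (and less than $2^n$), whose first row and first column consist of zeros. A square of type C is such a square with $16$ pairwise distinct entries, first row $0,1,2,3$ and first column $0,4,8,12$. The repeat pattern of a square of type B is the set of pairs of positions in which it has equal entries. Given a square $B$ of type B, a square $A$ of type A is a legit pair of $B$ if the entrywise sum $A+B$ has no repeated entries (then $A+B$ is of type C). *)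

(* Defs.v *)
From mathcomp Require Import all_boot all_fingroup.
Set Implicit Arguments. Unset Strict Implicit. Unset Printing Implicit Defensive.

(* Positions of a 4x4 array: (row, column). *)
Definition pos := ('I_4 * 'I_4)%type.

Definition o0 : 'I_4 := @Ordinal 4 0 isT.
Definition o1 : 'I_4 := @Ordinal 4 1 isT.
Definition o2 : 'I_4 := @Ordinal 4 2 isT.
Definition o3 : 'I_4 := @Ordinal 4 3 isT.

Definition bxor (a b : nat) : nat := Nat.lxor a b.

Definition quad (a b c d : nat) : bool := bxor (bxor (bxor a b) c) d == 0.

Definition is_square (S : pos -> nat) : bool :=
  [forall i : 'I_4, quad (S (i, o0)) (S (i, o1)) (S (i, o2)) (S (i, o3))]
  && [forall j : 'I_4, quad (S (o0, j)) (S (o1, j)) (S (o2, j)) (S (o3, j))].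

Definition typeB (n : nat) (B : pos -> nat) : bool :=
  [&& is_square B,
      [forall p : pos, (16 %| B p) && (B p < 2 ^ n)],
      [forall j : 'I_4, B (o0, j) == 0] &
      [forall i : 'I_4, B (i, o0) == 0]].

Definition typeA (A : {ffun pos -> 'I_16}) : bool :=
  [&& is_square (fun p => nat_of_ord (A p)),
      [forall j : 'I_4, nat_of_ord (A (o0, j)) == nat_of_ord j] &
      [forall i : 'I_4, nat_of_ord (A (i, o0)) == 4 * nat_of_ord i]].

Definition no_repeats (S : pos -> nat) : bool :=
  [forall p : pos, forall q : pos, (S p == S q) ==> (p == q)].

Definition legit_pairs (B : pos -> nat) : {set {ffun pos -> 'I_16}} :=
  [set A : {ffun pos -> 'I_16} |
     typeA A && no_repeats (fun p => nat_of_ord (A p) + B p)].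

Definition shuffle (r c : {perm 'I_4}) (tr : bool) (p : pos) : pos :=
  if tr then (r p.2, c p.1) else (r p.1, c p.2).

(* Main.v *)
From Stdlib Require Import PeanoNat.
From HB Require Import structures.
Require Import Defs.
From mathcomp Require Import all_boot all_fingroup zify.
Set Implicit Arguments. Unset Strict Implicit. Unset Printing Implicit Defensive.

Lemma bxorA : associative bxor. Proof. move=> a b c; exact: (esym (Nat.lxor_assoc a b c)). Qed.
Lemma bxorC : commutative bxor. Proof. move=> a b; exact: Nat.lxor_comm. Qed.
Lemma bxor0n : left_id 0 bxor. Proof. move=> a; exact: Nat.lxor_0_l. Qed.
Lemma bxorn0 a : bxor a 0 = a. Proof. exact: Nat.lxor_0_r. Qed.
Lemma bxornn a : bxor a a = 0. Proof. exact: Nat.lxor_nilpotent. Qed.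
Lemma bxor_eq0 a b : (bxor a b == 0) = (a == b).
Proof. apply/eqP/eqP => [/Nat.lxor_eq//|->]; exact: bxornn. Qed.

HB.instance Definition _ := Monoid.isComLaw.Build nat 0 bxor bxorA bxorC bxor0n.

Lemma quad_big (F : 'I_4 -> nat) :
  quad (F o0) (F o1) (F o2) (F o3) = (\big[bxor/0]_(j < 4) F j == 0).
Proof.
rewrite !big_ord_recl big_ord0 bxorn0 /quad !bxorA.
congr (bxor (bxor (bxor (F _) (F _)) (F _)) (F _) == 0); exact: val_inj.
Qed.

Lemma bxor_lt16 a b : a < 16 -> b < 16 -> bxor a b < 16.
Proof.
move=> ha hb.
have: all (fun x => all (fun y => bxor x y < 16) (iota 0 16)) (iota 0 16) by vm_compute.
by move/allP/(_ a); rewrite mem_iota ha => /(_ isT)/allP/(_ b); rewrite mem_iota hb => /(_ isT).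
Qed.

Lemma bxor4 a b c d : bxor (bxor a b) (bxor c d) = bxor (bxor a c) (bxor b d).
Proof. by rewrite !bxorA -(bxorA a b c) (bxorC b c) bxorA. Qed.
Lemma bxorKa x y a : bxor (bxor x a) (bxor y a) = bxor x y.
Proof. by rewrite bxor4 bxornn bxorn0. Qed.

Definition crossp (i : 'I_4) : pos :=
  match val i with 0 => (o0,o1) | 1 => (o0,o2) | 2 => (o1,o0) | _ => (o2,o0) end.
Definition ee (S : pos -> nat) i := bxor (S (crossp i)) (S (o0,o0)).
Definition comb (S : pos -> nat) k :=
  \big[bxor/0]_(i < 4) (if Nat.testbit k i then ee S i else 0).

Lemma selx b b' e : (if xorb b b' then e else 0) = bxor (if b then e else 0) (if b' then e else 0).
Proof. by case: b; case: b'; rewrite ?bxornn ?bxorn0 ?bxor0n. Qed.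

Lemma comb_xor S k k' : comb S (bxor k k') = bxor (comb S k) (comb S k').
Proof.
rewrite /comb -big_split; apply: eq_bigr => i _.
rewrite /bxor Nat.lxor_spec.
exact: selx.
Qed.

Lemma combE S k : comb S k =
  bxor (bxor (bxor (if Nat.testbit k 0 then ee S o0 else 0)
                   (if Nat.testbit k 1 then ee S o1 else 0))
             (if Nat.testbit k 2 then ee S o2 else 0))
       (if Nat.testbit k 3 then ee S o3 else 0).
Proof.
rewrite /comb !big_ord_recl big_ord0 bxorn0 !bxorA.
congr (bxor (bxor (bxor (if _ then ee S _ else 0) _) _) _); exact: val_inj.
Qed.

Lemma ord4_cases (j : 'I_4) : j = o0 \/ j = o1 \/ j = o2 \/ j = o3.
Proof.
case: j => [[|[|[|[|j]]]] hj] //.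
- by left; apply: val_inj.
- by right; left; apply: val_inj.
- by right; right; left; apply: val_inj.
- by right; right; right; apply: val_inj.
Qed.
Lemma cp0 : crossp o0 = (o0, o1). Proof. by []. Qed.
Lemma cp1 : crossp o1 = (o0, o2). Proof. by []. Qed.
Lemma cp2 : crossp o2 = (o1, o0). Proof. by []. Qed.
Lemma cp3 : crossp o3 = (o2, o0). Proof. by []. Qed.

Section Good.
Variable S : pos -> nat.
Hypothesis sq : is_square S.
Hypothesis lt16 : forall p, S p < 16.
Hypothesis cr : forall i j, S (o0, j) = S (i, o0) -> i = o0 /\ j = o0.

Local Notation a := (S (o0, o0)).

Lemma comb_lt k : comb S k < 16.
Proof.
rewrite /comb; apply: (big_ind (fun x => x < 16)) => //; first exact: bxor_lt16.
by move=> i _; case: Nat.testbit => //; apply: bxor_lt16.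
Qed.

Lemma row0 : S (o0, o3) = bxor (bxor a (S (o0,o1))) (S (o0,o2)).
Proof.
case/andP: sq => /forallP/(_ o0) h _.
by move: h; rewrite /quad bxor_eq0 => /eqP ->.
Qed.
Lemma col0 : S (o3, o0) = bxor (bxor a (S (o1,o0))) (S (o2,o0)).
Proof.
case/andP: sq => _ /forallP/(_ o0) h.
by move: h; rewrite /quad bxor_eq0 => /eqP ->.
Qed.

Lemma comb_row (j : 'I_4) : comb S j = bxor (S (o0, j)) a.
Proof.
case: (ord4_cases j) => [->|[->|[->|->]]]; rewrite combE /= ?cp0 ?cp1 ?cp2 ?cp3 /ee
  ?bxorn0 ?bxor0n ?bxornn //.
rewrite bxorKa row0 cp0 cp1.
by rewrite (bxorC _ a) bxorA bxorA bxornn bxor0n.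
Qed.

Lemma comb_col (i : 'I_4) : comb S (4 * i) = bxor (S (i, o0)) a.
Proof.
case: (ord4_cases i) => [->|[->|[->|->]]]; rewrite combE /= ?cp0 ?cp1 ?cp2 ?cp3 /ee
  ?bxorn0 ?bxor0n ?bxornn //.
rewrite bxorKa col0 cp2 cp3.
by rewrite (bxorC _ a) bxorA bxorA bxornn bxor0n.
Qed.


Lemma split16 k : k < 16 -> k = bxor (k %% 4) (4 * (k %/ 4)).
Proof.
move=> hk.
have: all (fun x => x == bxor (x %% 4) (4 * (x %/ 4))) (iota 0 16) by vm_compute.
by move/allP/(_ k); rewrite mem_iota hk => /(_ isT)/eqP.
Qed.

Lemma comb0 : comb S 0 = 0.
Proof. by rewrite combE /= !bxorn0. Qed.

Lemma comb_ker k : k < 16 -> comb S k = 0 -> k = 0.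
Proof.
move=> hk.
have hj : k %% 4 < 4 by rewrite ltn_mod.
have hi : k %/ 4 < 4 by rewrite ltn_divLR.
rewrite {1}(split16 hk) comb_xor.
have := comb_row (Ordinal hj); have := comb_col (Ordinal hi); rewrite /= => -> ->.
move/eqP; rewrite bxorKa bxor_eq0 => /eqP h; case: (cr h) => /(congr1 val) /= e1 /(congr1 val) /= e2.
by rewrite (divn_eq k 4) e1 e2.
Qed.

Lemma comb_inj k k' : k < 16 -> k' < 16 -> comb S k = comb S k' -> k = k'.
Proof.
move=> hk hk' e; apply/eqP; rewrite -bxor_eq0; apply/eqP; apply: comb_ker.
  exact: bxor_lt16.
by rewrite comb_xor e bxornn.
Qed.

Definition combo (k : 'I_16) : 'I_16 := Ordinal (comb_lt k).

Lemma combo_inj : injective combo.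
Proof. move=> k k' /(congr1 val) /= /comb_inj e; apply: val_inj; exact: e. Qed.

Lemma comb_onto v : v < 16 -> exists k : 'I_16, comb S k = v.
Proof.
move=> hv; have /codomP [k hk] := injF_onto combo_inj (Ordinal hv).
by exists k; rewrite -[v]/(val (Ordinal hv)) hk.
Qed.

Definition coord v : 'I_16 := odflt ord0 [pick k : 'I_16 | comb S k == v].

Lemma coordK v : v < 16 -> comb S (coord v) = v.
Proof.
move=> hv; rewrite /coord; case: pickP => [k /eqP //|].
by case: (comb_onto hv) => k hk /(_ k); rewrite hk eqxx.
Qed.

Definition normal : {ffun pos -> 'I_16} := [ffun p => coord (bxor (S p) (S (o0, o0)))].

Lemma normalE p : comb S (normal p) = bxor (S p) a.
Proof. by rewrite ffunE coordK // bxor_lt16. Qed.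

Lemma normal_quad p q r s :
  quad (normal p) (normal q) (normal r) (normal s) = quad (S p) (S q) (S r) (S s).
Proof.
rewrite /quad.
have hX : bxor (bxor (bxor (normal p) (normal q)) (normal r)) (normal s) < 16.
  by do 3 apply: bxor_lt16 => //.
have -> : forall X, X < 16 -> (X == 0) = (comb S X == 0).
  by move=> X hX'; apply/eqP/eqP => [->|/comb_ker]; [exact: comb0 | apply].
rewrite !comb_xor !normalE bxorKa -bxorA bxorKa bxorA.
by [].
exact: hX.
Qed.

Lemma normal_typeA : typeA normal.
Proof.
apply/and3P; split.
- case/andP: sq => /forallP hr /forallP hc.
  by apply/andP; split; apply/forallP => i; rewrite normal_quad; [apply: hr | apply: hc].
- apply/forallP => j; apply/eqP; apply: comb_inj => //.
    by apply: (leq_trans (ltn_ord j)).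
  by rewrite normalE comb_row.
- apply/forallP => i; apply/eqP; apply: comb_inj => //.
    by case: i => [[|[|[|[|i]]]] hi].
  by rewrite normalE comb_col.
Qed.

End Good.

Lemma quad_eq x y z : quad x y z z = (x == y).
Proof. by rewrite /quad -bxorA bxornn bxorn0 bxor_eq0. Qed.

Lemma sum_eq (a b : 'I_16) x y : 16 %| x -> 16 %| y ->
  (a + x == b + y) = ((a == b :> nat) && (x == y)).
Proof.
case/dvdnP=> u -> /dvdnP [v ->].
have ha := ltn_ord a; have hb := ltn_ord b.
move: (nat_of_ord a) (nat_of_ord b) ha hb => m k hm hk.
apply/eqP/andP => [e|[/eqP -> /eqP ->]] //.
split; apply/eqP; lia.
Qed.

Lemma legit_char B A : (forall p, 16 %| B p) ->
  (A \in legit_pairs B) =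
  typeA A && [forall p, forall q, ((A p == A q :> nat) && (B p == B q)) ==> (p == q)].
Proof.
move=> hB; rewrite inE /no_repeats; congr (_ && _).
apply: eq_forallb => p; apply: eq_forallb => q; by rewrite sum_eq.
Qed.

Lemma shuffle_square r c tr S : is_square S -> is_square (fun p => S (shuffle r c tr p)).
Proof.
case/andP => /forallP hr /forallP hc; apply/andP; split; apply/forallP => i.
- rewrite (quad_big (fun j => S (shuffle r c tr (i, j)))); case: tr => /=.
  + by have := hc (c i); rewrite (quad_big (fun j => S (j, c i))) (reindex_inj (@perm_inj _ r)).
  + by have := hr (r i); rewrite (quad_big (fun j => S (r i, j))) (reindex_inj (@perm_inj _ c)).
- rewrite (quad_big (fun j => S (shuffle r c tr (j, i)))); case: tr => /=.
  + by have := hr (r i); rewrite (quad_big (fun j => S (r i, j))) (reindex_inj (@perm_inj _ c)).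
  + by have := hc (c i); rewrite (quad_big (fun j => S (j, c i))) (reindex_inj (@perm_inj _ r)).
Qed.

Lemma shuffle_inv r c tr : exists r' c' tr',
  cancel (shuffle r c tr) (shuffle r' c' tr') /\ cancel (shuffle r' c' tr') (shuffle r c tr).
Proof.
case: tr.
- exists c^-1%g, r^-1%g, true; split => [[x y]|[x y]] /=; by rewrite ?permK ?permKV.
- exists r^-1%g, c^-1%g, false; split => [[x y]|[x y]] /=; by rewrite ?permK ?permKV.
Qed.

Lemma typeA_quad_inj (A A' : {ffun pos -> 'I_16}) : typeA A -> typeA A' ->
  (forall p q r s, quad (A p) (A q) (A r) (A s) = quad (A' p) (A' q) (A' r) (A' s)) ->
  A = A'.
Proof.
case/and3P => _ /forallP h1 /forallP h2; case/and3P => _ /forallP h1' /forallP h2' hq.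
apply/ffunP => p; apply: val_inj.
have hv := ltn_ord (A p).
have hj : A p %% 4 < 4 by rewrite ltn_mod.
have hi : A p %/ 4 < 4 by rewrite ltn_divLR.
have := hq p (o0, Ordinal hj) (Ordinal hi, o0) (o0, o0).
rewrite (eqP (h1 (Ordinal hj))) (eqP (h2 (Ordinal hi))) (eqP (h1' (Ordinal hj))) (eqP (h2' (Ordinal hi))).
rewrite (eqP (h1 o0)) (eqP (h1' o0)) /= /quad !bxorn0 -!bxorA -(split16 hv) bxornn eqxx.
by move/esym; rewrite bxor_eq0 => /eqP ->.
Qed.

Lemma le_legit (B1 B2 : pos -> nat) (f g : pos -> pos) :
  cancel f g -> cancel g f ->
  (forall S, is_square S -> is_square (fun p => S (f p))) ->
  (forall p, 16 %| B1 p) -> (forall p, 16 %| B2 p) ->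
  (forall i j, B2 (o0, j) = B2 (i, o0)) ->
  (forall p q, B2 p = B2 q -> B1 (f p) = B1 (f q)) ->
  #|legit_pairs B1| <= #|legit_pairs B2|.
Proof.
move=> fK gK fsq hB1 hB2 hcr hBf.
pose SA (A : {ffun pos -> 'I_16}) := fun p => nat_of_ord (A (f p)).
pose Phi A := normal (SA A).
have good : forall A, A \in legit_pairs B1 ->
  [/\ is_square (SA A), forall p, SA A p < 16,
      forall i j, SA A (o0, j) = SA A (i, o0) -> i = o0 /\ j = o0 &
      forall p q, SA A p = SA A q -> B1 (f p) = B1 (f q) -> p = q].
  move=> A; rewrite legit_char // => /andP [/and3P [sqA _ _] /forallP hl].
  have inj : forall p q, SA A p = SA A q -> B1 (f p) = B1 (f q) -> p = q.
    move=> p q e1 e2; apply: (can_inj fK).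
    by have := hl (f p) => /forallP /(_ (f q)); rewrite /SA in e1; rewrite e1 e2 !eqxx => /eqP.
  split => //.
  - exact: (fsq (fun p => nat_of_ord (A p))).
  - by move=> p; exact: ltn_ord.
  - move=> i j e; have := inj _ _ e (hBf _ _ (hcr i j)); case=> -> ->; by [].
have Pquad : forall A, A \in legit_pairs B1 -> forall p q r s,
    quad (Phi A p) (Phi A q) (Phi A r) (Phi A s) = quad (SA A p) (SA A q) (SA A r) (SA A s).
  by move=> A /good [h1 h2 h3 _]; apply: normal_quad.
rewrite -(card_in_imset (f := Phi)).
  apply: subset_leq_card; apply/subsetP => _ /imsetP [A hA ->].
  have [h1 h2 h3 h4] := good A hA.
  rewrite legit_char // normal_typeA //=; apply/forallP => p; apply/forallP => q.
  apply/implyP => /andP [e1 /eqP e2]; apply/eqP; apply: h4 (hBf _ _ e2).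
  apply/eqP; rewrite -(quad_eq _ _ (SA A p)) -Pquad // quad_eq; exact: e1.
move=> A A' hA hA'; move=> e; apply: typeA_quad_inj.
- by move: hA; rewrite legit_char // => /andP [].
- by move: hA'; rewrite legit_char // => /andP [].
move=> p q r s.
have := Pquad A hA (g p) (g q) (g r) (g s).
rewrite e Pquad // /SA !gK => <-; by [].
Qed.

Theorem mainTheorem5 (n : nat) (B1 B2 : pos -> nat) :
  4 <= n -> typeB n B1 -> typeB n B2 ->
  (exists (r c : {perm 'I_4}) (tr : bool),
      forall p q : pos,
        B1 p = B1 q <-> B2 (shuffle r c tr p) = B2 (shuffle r c tr q)) ->
  #|legit_pairs B1| = #|legit_pairs B2|.
Proof.
move=> _ hb1 hb2 [r [c [tr H]]].
have [r' [c' [tr' [K1 K2]]]] := shuffle_inv r c tr.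
have dv : forall n B, typeB n B -> forall p, 16 %| B p.
  by move=> m B /and4P [_ /forallP h _ _] p; case/andP: (h p).
have cz : forall n B, typeB n B -> forall i j, B (o0, j) = B (i, o0).
  move=> m B /and4P [_ _ /forallP h1 /forallP h2] i j.
  by rewrite (eqP (h1 j)) (eqP (h2 i)).
apply/eqP; rewrite eqn_leq; apply/andP; split.
- apply: (le_legit (f := shuffle r' c' tr') (g := shuffle r c tr)) => //.
  + move=> S; exact: shuffle_square.
  + exact: dv hb1.
  + exact: dv hb2.
  + exact: cz hb2.
  + by move=> p q e; apply/H; rewrite !K2.
- apply: (le_legit (f := shuffle r c tr) (g := shuffle r' c' tr')) => //.
  + move=> S; exact: shuffle_square.
  + exact: dv hb2.
  + exact: dv hb1.
  + exact: cz hb1.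
  + by move=> p q /H.
Qed.
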